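(* Assume Assumption 1, Assumption 2 and the null hypothesis $H_0:\ T_i(1)=T_i(0)$ for all $i$, and condition on $\boldsymbol{T}(1),\boldsymbol{T}(0)$. Then $$\mathbb{E}\{U\mid\boldsymbol{T}(1),\boldsymbol{T}(0)\}\ \ge\ p_1p_0\Big(\frac{n}{\tilde d+1}\cdot\frac1n\sum_{i=1}^n\tilde G(T_i(0))-1\Big)=p_1p_0\Big(\frac{n\tilde g}{\tilde d+1}-1\Big).$$
   Context: There are $n$ units. Unit $i$ has potential event times $T_i(1),T_i(0)\ge 0$, potential censoring times $C_i(1),C_i(0)\in[0,\infty]$, and treatment indicator $Z_i\in\{0,1\}$; bold letters denote $n$-vectors. Assumption 1: conditional on $\boldsymbol{T}(1),\boldsymbol{T}(0),\boldsymbol{C}(1),\boldsymbol{C}(0)$, the $Z_i$ are i.i.d. Bernoulli$(p_1)$, $p_1=1-p_0\in(0,1)$. Assumption 2: $(\boldsymbol{C}(1),\boldsymbol{C}(0))$ is independent of $(\boldsymbol{T}(1),\boldsymbol{T}(0))$ and the pairs $(C_i(1),C_i(0))$ are i.i.d. across $i$. $G_z(c)=\Pr(C_i(z)\ge c)$, $\tilde G(t)=G_1(t)G_0(t)$. Realized: $W_i=\min\{T_i,C_i\}$, $\Delta_i=\mathbb{1}(T_i\le C_i)$ with $T_i=Z_iT_i(1)+(1-Z_i)T_i(0)$, $C_i=Z_iC_i(1)+(1-Z_i)C_i(0)$. Let $t_1<\dots<t_K$ be the distinct values of $\{T_i(0)\}$, $d_k=\#\{i:T_i(0)=t_k\}$,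 $\tilde d=\max_kd_k$, $\tilde g=n^{-1}\sum_i\tilde G(T_i(0))$. For $1\le k\le K$: $N_{1k},N_{0k}$ the numbers of treated / control units with $W_i\ge t_k$, $N_k=N_{1k}+N_{0k}$, $D_k=\sum_i\Delta_i\mathbb{1}(W_i=t_k)$, $V_k=D_k(N_k-D_k)N_{1k}N_{0k}/\{N_k^2(N_k-1)\}$ (convention $0/0:=0$), $U=\sum_{k=1}^KV_k$. *)

(* Defs.v *)
From HB Require Import structures.
From mathcomp Require Import all_boot all_order all_algebra.
From mathcomp Require Import all_classical all_reals all_analysis.
From mathcomp Require Import measurable_realfun lebesgue_measure lebesgue_integral.
Set Implicit Arguments. Unset Strict Implicit. Unset Printing Implicit Defensive.
Import Order.TTheory GRing.Theory Num.Theory.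
Local Open Scope ring_scope.
Local Open Scope classical_set_scope.

(* The log-rank variance statistic U = \sum_k V_k, as a function of the
   (fixed) potential event times T1 T0, the realized treatment vector z and
   the realized potential censoring times c1 c0 (values in [0, +oo]). *)
Definition logrank_U (R : realType) (n : nat) (T1 T0 : 'I_n -> R)
    (z : 'I_n -> bool) (c1 c0 : 'I_n -> \bar R) : R :=
  let T i := if z i then T1 i else T0 i in
  let C i := if z i then c1 i else c0 i in
  let W i := Order.min ((T i)%:E) (C i) in
  let Dl i := ((T i)%:E <= C i)%E in
  \sum_(tk <- undup [seq T0 i | i <- enum 'I_n])
    (let N1 : R := (#|[set i | z i && (tk%:E <= W i)%E]|)%:R in
     let N0 : R := (#|[set i | ~~ z i && (tk%:E <= W i)%E]|)%:R in
     let N := N1 + N0 in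
     let D : R := (#|[set i | Dl i && (W i == tk%:E)]|)%:R in
     (* division by 0 yields 0 in MathComp, matching the convention 0/0 := 0 *)
     D * (N - D) * N1 * N0 / (N ^+ 2 * (N - 1))).

(* G_z(c) = Pr(C_i(z) >= c), where mu is the common law of (C_i(1), C_i(0)). *)
Definition Gcens (R : realType) (mu : probability (\bar R * \bar R)%type R)
    (z : bool) (c : R) : R :=
  fine (mu [set p | (c%:E <= (if z then p.1 else p.2))%E]).

Definition Gtilde (R : realType) (mu : probability (\bar R * \bar R)%type R)
    (c : R) : R := Gcens mu true c * Gcens mu false c.

Definition dtilde (R : realType) (n : nat) (T0 : 'I_n -> R) : nat :=
  \max_(i < n) #|[set j | T0 j == T0 i]|.

Definition gtilde (R : realType) (n : nat) (mu : probability (\bar R * \bar R)%type R)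
    (T0 : 'I_n -> R) : R :=
  n%:R^-1 * \sum_(i < n) Gtilde mu (T0 i).

(* Main.v *)
Require Import Defs.
From HB Require Import structures.
From mathcomp Require Import all_boot all_order all_algebra.
From mathcomp Require Import all_classical all_reals all_analysis.
From mathcomp Require Import measurable_realfun lebesgue_measure lebesgue_integral.
From mathcomp Require Import ring lra.
Import Order.TTheory GRing.Theory Num.Theory.
Local Open Scope ring_scope.
Local Open Scope classical_set_scope.
Set Implicit Arguments. Unset Strict Implicit. Unset Printing Implicit Defensive.

Local Close Scope classical_set_scope.
Lemma sum_ffun_pair (R : comNzRingType) (I : finType) (F : I -> bool -> R)
  (g h : bool -> R) (i j : I) :
  (forall l, F l true + F l false = 1) -> i != j ->
  \sum_(f : {ffun I -> bool}) (\prod_l F l (f l)) * (g (f i) * h (f j)) =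
  (F i true * g true + F i false * g false) * (F j true * h true + F j false * h false).
Proof.
move=> F1 ij.
pose G l x := F l x * ((if l == i then g x else 1) * (if l == j then h x else 1)).
have -> : \sum_(f : {ffun I -> bool}) (\prod_l F l (f l)) * (g (f i) * h (f j))
   = \sum_(f : {ffun I -> bool}) \prod_l G l (f l).
  apply: eq_bigr => f _; rewrite /G big_split /= big_split /=.
  by rewrite -!big_mkcond /= !big_pred1_eq.
rewrite -bigA_distr_bigA /= (bigD1 i) //= (bigD1 j) 1?eq_sym //=.
rewrite [X in _ * (_ * X)]big1 ?mulr1; last first.
  move=> l /andP[/negbTE li /negbTE lj]; rewrite big_bool /G li lj !mulr1; exact: F1.
rewrite !big_bool /G !eqxx (negbTE ij) eq_sym (negbTE ij) !mulr1 !mul1r.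
done.
Qed.
Lemma natr_card (R : realType) (I : finType) (P : pred I) :
  ((#|[set i | P i]|)%:R : R) = \sum_i (P i)%:R.
Proof.
rewrite -sum1_card natr_sum big_mkcond /=; apply: eq_bigr => i _.
by rewrite inE; case: (P i).
Qed.

Lemma key_ineq (R : realType) (D N dd : nat) (ej : bool) : (D <= dd)%N -> (D + ej <= N)%N ->
  (D%:R * ej%:R / (dd%:R + 1) : R) <=
  D%:R * (N%:R - D%:R) / (N%:R^+2 * (N%:R - 1)) * (N%:R^+2 - N%:R).
Proof.
move=> Ddd DN.
have [->|D0] := eqVneq D 0%N; first by rewrite !mul0r.
have [N0|N0] := eqVneq N 0%N; first by move: DN; rewrite N0 leqn0 addn_eq0 (negbTE D0).
have [N1|N1] := eqVneq N 1%N.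
  have D1 : D = 1%N by move: DN D0; rewrite N1; clear; case: D => [|[|]]//; case: ej.
  move: DN; rewrite N1 D1; case: ej => //= _; by rewrite !mulr0 !mul0r.
have N2 : (2 <= N)%N by case: N N0 N1 DN => [|[|]].
have NR : (N%:R : R) != 0 by rewrite pnatr_eq0.
have N1R : (N%:R - 1 : R) != 0 by rewrite subr_eq0 (_ : 1 = 1%:R) // eqr_nat.
have -> : D%:R * (N%:R - D%:R) / (N%:R ^+ 2 * (N%:R - 1)) * (N%:R ^+ 2 - N%:R)
   = (D%:R * (N%:R - D%:R) / N%:R : R).
  by field; rewrite NR N1R.
have DNR : (D%:R <= N%:R :> R) by rewrite ler_nat; apply: leq_trans DN; exact: leq_addr.
case: ej DN => /= DN; last first.
  by rewrite mulr0 mul0r divr_ge0 ?mulr_ge0 ?subr_ge0.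
rewrite mulr1 ler_pdivrMr ?ltr0n ?lt0n //.
rewrite mulrAC ler_pdivlMr ?ltr0n ?lt0n //.
have : ((D + 1)%:R <= N%:R :> R) by rewrite ler_nat.
have : (D%:R <= dd%:R :> R) by rewrite ler_nat.
rewrite natrD => h1 h2.
have D0r : (0 <= D%:R :> R) by [].
have dd0 : (0 <= dd%:R :> R) by [].
have p1 : 0 <= D%:R * ((N%:R - D%:R - 1) * dd%:R) :> R.
  by rewrite mulr_ge0 // mulr_ge0 //; lra.
have p2 : 0 <= D%:R * (dd%:R - D%:R) :> R by rewrite mulr_ge0 //; lra.
nra.
Qed.

Definition Vf (R : realType) (n : nat) (T0 : 'I_n -> R) (t : R) (b e : 'I_n -> bool) : R :=
  let N1 : R := (#|[set i | b i && ((t <= T0 i) && e i)]|)%:R in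
  let N0 : R := (#|[set i | ~~ b i && ((t <= T0 i) && e i)]|)%:R in
  let N := N1 + N0 in
  let D : R := (#|[set i | (T0 i == t) && e i]|)%:R in
  D * (N - D) * N1 * N0 / (N ^+ 2 * (N - 1)).

Lemma card_split (R : realType) n (b c : 'I_n -> bool) :
  ((#|[set i | b i && c i]|)%:R + (#|[set i | ~~ b i && c i]|)%:R : R) =
  (#|[set i | c i]|)%:R.
Proof.
rewrite !natr_card -big_split /=; apply: eq_bigr => i _.
by case: (b i); case: (c i); rewrite /= ?addr0 ?add0r.
Qed.

Lemma Dsub (R : realType) n (T0 : 'I_n -> R) t (e : 'I_n -> bool) :
  [set i | (T0 i == t) && e i] \subset [set i | (t <= T0 i) && e i].
Proof.
by apply/fintype.subsetP => i; rewrite !inE => /andP[/eqP <- ->]; rewrite lexx.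
Qed.

Lemma Vf_ge0 (R : realType) n (T0 : 'I_n -> R) t (b e : 'I_n -> bool) :
  0 <= Vf T0 t b e.
Proof.
rewrite /Vf card_split.
have := subset_leq_card (Dsub T0 t e).
set D := #|[set i | (T0 i == t) && e i]|.
set N := #|[set i | (t <= T0 i) && e i]|.
move=> DN.
have DNR : (D%:R <= N%:R :> R) by rewrite ler_nat.
apply: divr_ge0; first by rewrite !mulr_ge0 // subr_ge0.
have [->|N0] := eqVneq N 0%N; first by rewrite expr2 !mul0r.
rewrite mulr_ge0 // subr_ge0 (_ : 1 = 1%:R) // ler_nat lt0n.
exact: N0.
Qed.

Lemma label_sum (R : realType) n (T0 : 'I_n -> R) t (e : 'I_n -> bool)
  (k : bool -> bool -> R) :
  (forall y, k true y + k false y = 1) ->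
  \sum_(b : {ffun 'I_n -> bool}) (\prod_l k (b l) (e l)) *
     ((#|[set i | b i && ((t <= T0 i) && e i)]|)%:R *
      (#|[set i | ~~ b i && ((t <= T0 i) && e i)]|)%:R)
  = k true true * k false true *
    ((#|[set i | (t <= T0 i) && e i]|)%:R ^+ 2 - (#|[set i | (t <= T0 i) && e i]|)%:R).
Proof.
move=> k1.
set c := fun i => (t <= T0 i) && e i.
have step : forall b : {ffun 'I_n -> bool},
  (\prod_l k (b l) (e l)) * ((#|[set i | b i && c i]|)%:R * (#|[set i | ~~ b i && c i]|)%:R)
  = \sum_i \sum_j (\prod_l k (b l) (e l)) * ((b i && c i)%:R * (~~ b j && c j)%:R).
  move=> b; rewrite !natr_card big_distrl big_distrr /=; apply: eq_bigr => i _.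
  by rewrite big_distrr big_distrr /=.
rewrite (eq_bigr _ (fun b _ => step b)) exchange_big /=.
have inner : forall i j : 'I_n,
  \sum_(b : {ffun 'I_n -> bool}) (\prod_l k (b l) (e l)) * ((b i && c i)%:R * (~~ b j && c j)%:R)
  = if i == j then 0 else (c i)%:R * (c j)%:R * (k true true * k false true).
  move=> i j; case: eqVneq => [<-|ij].
    by rewrite big1 // => b _; case: (b i); rewrite /= ?mul0r ?mulr0.
  rewrite (@sum_ffun_pair R 'I_n (fun l x => k x (e l)) (fun x => (x && c i)%:R)
             (fun x => (~~ x && c j)%:R) i j) //=.
  rewrite /c; case: (e i); case: (e j); case: (t <= T0 i); case: (t <= T0 j);
    rewrite /= ?mulr0 ?mul0r ?addr0 ?add0r ?mulr1 ?mul1r //; ring.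

have -> : \sum_i \sum_(b : {ffun 'I_n -> bool}) \sum_j
    (\prod_l k (b l) (e l)) * ((b i && c i)%:R * (~~ b j && c j)%:R)
  = \sum_i \sum_j (if i == j then 0 else (c i)%:R * (c j)%:R * (k true true * k false true)).
  apply: eq_bigr => i _; rewrite exchange_big /=; apply: eq_bigr => j _; exact: inner.
rewrite natr_card.
have -> : \sum_i ((t <= T0 i) && e i)%:R = \sum_i (c i)%:R :> R by [].
set K := k true true * k false true.
set S := \sum_i (c i)%:R.
have h : forall i, \sum_j (if i == j then 0 else (c i)%:R * (c j)%:R * K)
    = (c i)%:R * K * S - (c i)%:R * K.
  move=> i.
  have ci2 : (c i)%:R * (c i)%:R = (c i)%:R :> R by case: (c i); rewrite ?mulr1 ?mulr0.
  rewrite (bigD1 i) //= eqxx add0r /S [X in _ = _ * X - _](bigD1 i) //=.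
  rewrite (eq_bigr (fun j => (c i)%:R * K * (c j)%:R)); last first.
    by move=> j /negbTE; rewrite eq_sym => ->; ring.
  rewrite -big_distrr /= mulrDr (mulrAC _ K (c i)%:R) ci2; ring.
rewrite (eq_bigr _ (fun i _ => h i)) sumrB -!big_distrl /= -/S expr2; ring.
Qed.

Lemma presence_sum (R : realType) n (T0 : 'I_n -> R) t (j : 'I_n)
  (rho : bool -> R) :
  rho true + rho false = 1 -> t < T0 j ->
  \sum_(e : {ffun 'I_n -> bool}) (\prod_l rho (e l)) *
     ((#|[set i | (T0 i == t) && e i]|)%:R * (e j)%:R)
  = (#|[set i | T0 i == t]|)%:R * rho true ^+ 2.
Proof.
move=> r1 tj.
under eq_bigr do rewrite natr_card big_distrl big_distrr /=.
rewrite exchange_big /= natr_card big_distrl /=; apply: eq_bigr => i _.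
have [/eqP ti|ti] := boolP (T0 i == t); last first.
  by rewrite mul0r big1 // => e _; rewrite /= !mul0r mulr0.
have ij : i != j by apply/eqP => ij; move: tj; rewrite -ij ti ltxx.
rewrite (eq_bigr (fun e : {ffun 'I_n -> bool} => (\prod_l rho (e l)) * ((fun x : bool => x%:R) (e i) * (fun x : bool => x%:R) (e j)))); last first.
  by move=> e _.
rewrite (@sum_ffun_pair R 'I_n (fun l x => rho x) (fun x : bool => x%:R)
             (fun x : bool => x%:R) i j) //=.
by rewrite !mulr1 !mulr0 !addr0 mul1r expr2.
Qed.

Lemma Ek_bound (R : realType) n (T0 : 'I_n -> R) t (q : bool -> bool -> R)
  (j : 'I_n) (dd : nat) :
  (forall x y, 0 <= q x y) ->
  q true true + q false true + (q true false + q false false) = 1 ->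
  t < T0 j -> (#|[set i | T0 i == t]| <= dd)%N ->
  q true true * q false true * (#|[set i | T0 i == t]|)%:R / (dd%:R + 1) <=
  \sum_(b : {ffun 'I_n -> bool}) \sum_(e : {ffun 'I_n -> bool})
     Vf T0 t b e * \prod_l q (b l) (e l).
Proof.
move=> q0 q1 tj hdd.
pose rho y := q true y + q false y.
pose kap (x y : bool) := if rho y == 0 then (x%:R : R) else q x y / rho y.
have qE x y : q x y = rho y * kap x y.
  rewrite /kap; case: eqP => [r0|/eqP r0]; last by rewrite mulrC divfK.
  rewrite r0 mul0r; move: r0; rewrite /rho.
  have := q0 true y; have := q0 false y; case: x => /=; lra.
have kap1 y : kap true y + kap false y = 1.
  rewrite /kap; case: eqP => [_|/eqP r0]; first by rewrite addr0.
  by rewrite -mulrDl divff.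
have rho1 : rho true + rho false = 1 by rewrite /rho.
have rho0 y : 0 <= rho y by rewrite /rho addr_ge0.
set d := #|[set i | T0 i == t]|.
pose Np (e : 'I_n -> bool) : R := (#|[set i | (t <= T0 i) && e i]|)%:R.
pose Dn (e : 'I_n -> bool) : R := (#|[set i | (T0 i == t) && e i]|)%:R.
pose c e := Dn e * (Np e - Dn e) / (Np e ^+ 2 * (Np e - 1)).
have VfE (b e : 'I_n -> bool) : Vf T0 t b e = c e *
    ((#|[set i | b i && ((t <= T0 i) && e i)]|)%:R *
     (#|[set i | ~~ b i && ((t <= T0 i) && e i)]|)%:R).
  rewrite /Vf card_split /c /Np /Dn; ring.
rewrite exchange_big /=.
have inner (e : {ffun 'I_n -> bool}) :
   \sum_(b : {ffun 'I_n -> bool}) Vf T0 t b e * \prod_l q (b l) (e l)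
   = (\prod_l rho (e l)) * (c e * (kap true true * kap false true *
        (Np e ^+ 2 - Np e))).
  rewrite -(label_sum T0 t e kap1) big_distrr big_distrr /=.
  apply: eq_bigr => b _; rewrite VfE.
  rewrite (eq_bigr (fun l => rho (e l) * kap (b l) (e l))); last by move=> l _; rewrite qE.
  rewrite big_split /=; ring.
rewrite (eq_bigr _ (fun e _ => inner e)).
pose K := kap true true * kap false true.
have K0 : 0 <= K.
  rewrite /K /kap; case: eqP => _; first by rewrite mulr_ge0.
  by rewrite mulr_ge0 // divr_ge0.
apply: (@le_trans _ _ (\sum_(e : {ffun 'I_n -> bool}) (\prod_l rho (e l)) *
     (K * (Dn e * (e j)%:R / (dd%:R + 1))))).
  rewrite (eq_bigr (fun e : {ffun 'I_n -> bool} => K * ((\prod_l rho (e l)) * (Dn e * (e j)%:R)) / (dd%:R + 1))); last first.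
    by move=> e _; ring.
  rewrite -big_distrl -big_distrr /= presence_sum // -/d.
  rewrite (qE true true) (qE false true) /K le_eqVlt; apply/orP; left; apply/eqP.
  ring.
apply: ler_sum => e _.
apply: (@ler_wpM2l _ (\prod_l rho (e l))); first by apply: prodr_ge0 => l _.
rewrite [X in _ <= X]mulrCA -/K; apply: (ler_wpM2l K0).
have DN := subset_leq_card (Dsub T0 t e).
have Dd : (#|[set i | (T0 i == t) && e i]| <= dd)%N.
  apply: leq_trans hdd; apply: subset_leq_card; apply/fintype.subsetP => i.
  by rewrite !inE => /andP[].
have DNj : (#|[set i | (T0 i == t) && e i]| + e j <=
            #|[set i | (t <= T0 i)%R && e i]|)%N.
  case ej: (e j); last by rewrite addn0.
  rewrite addn1; apply: proper_card; apply/properP; split; first exact: Dsub.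
  exists j; first by rewrite inE ej andbT ltW.
  by rewrite inE ej andbT; apply/negP => /eqP tjE; move: tj; rewrite tjE ltxx.
have := @key_ineq R _ _ _ _ Dd DNj.
by rewrite /c /Np /Dn.
Qed.

Local Open Scope classical_set_scope.

Definition Bs (R : realType) (t : R) (x y : bool) : set (\bar R * \bar R)%type :=
  [set p | (t%:E <= (if x then p.1 else p.2))%E = y].

Lemma Bs_measurable (R : realType) (t : R) x y : measurable (Bs t x y).
Proof.
have mS : measurable [set v : \bar R | (t%:E <= v)%E = y].
  have mI : measurable `[t%:E, +oo[%classic by exact: emeasurable_itv.
  rewrite set_itvcy in mI.
  case: y; first exact: mI.
  have -> : [set v : \bar R | (t%:E <= v)%E = false] = ~` [set v | (t%:E <= v)%E].
    by apply/seteqP; split => v /=; case: (t%:E <= v)%E.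
  exact: measurableC.
case: x.
- by have := @measurable_fst _ _ (\bar R) (\bar R) measurableT _ mS; rewrite setTI.
- by have := @measurable_snd _ _ (\bar R) (\bar R) measurableT _ mS; rewrite setTI.
Qed.

Lemma mu_Bs (R : realType) (mu : probability (\bar R * \bar R)%type R) t x y :
  mu (Bs t x y) = (if y then Gcens mu x t else 1 - Gcens mu x t)%:E.
Proof.
have fT : mu (Bs t x true) = (Gcens mu x t)%:E.
  by rewrite /Gcens fineK //; apply: fin_num_measure; exact: Bs_measurable.
case: y => //.
have -> : Bs t x false = ~` Bs t x true.
  by apply/seteqP; split => p /=; rewrite /Bs /=; case: (t%:E <= _)%E.
by rewrite probability_setC ?fT //; exact: Bs_measurable.
Qed.

Lemma U_eq (R : realType) n (T1 T0 : 'I_n -> R) (z : 'I_n -> bool)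
  (c1 c0 : 'I_n -> \bar R) : (forall i, T1 i = T0 i) ->
  logrank_U T1 T0 z c1 c0 = \sum_(tk <- undup [seq T0 i | i <- enum 'I_n])
     Vf T0 tk z (fun i => (tk%:E <= (if z i then c1 i else c0 i))%E).
Proof.
move=> H0; rewrite /logrank_U /=; apply: eq_bigr => tk _.
have E1 i : (tk%:E <= Order.min (if z i then T1 i else T0 i)%:E
                     (if z i then c1 i else c0 i))%E
   = (tk <= T0 i) && (tk%:E <= (if z i then c1 i else c0 i))%E.
  by rewrite H0 if_same le_min lee_fin.
have E2 i : (((if z i then T1 i else T0 i)%:E <= (if z i then c1 i else c0 i))%E &&
     (Order.min (if z i then T1 i else T0 i)%:E (if z i then c1 i else c0 i) == tk%:E))
   = (T0 i == tk) && (tk%:E <= (if z i then c1 i else c0 i))%E.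
  rewrite H0 if_same; set c := (if z i then c1 i else c0 i).
  case: (leP (T0 i)%:E c) => h /=.
    by rewrite eqe; case: eqP => [<-|] //=; rewrite h.
  symmetry; apply/negbTE; apply/negP => /andP[/eqP E h2]; by move: h; rewrite E ltNge h2.
rewrite /Vf /=.
congr (_ * (_ + _ - _) * _ * _ / ((_ + _) ^+ 2 * (_ + _ - 1))).
all: congr (_%:R); rewrite mem_setE; apply: eq_card => i.
all: rewrite !inE /= unfold_in /=.
- by rewrite E2.
- by rewrite E1.
- by rewrite E1.
- by rewrite E2.
- by rewrite E1.
- by rewrite E1.
- by rewrite E1.
- by rewrite E1.
- by rewrite E1.
- by rewrite E1.
Qed.

Definition qf (R : realType) (mu : probability (\bar R * \bar R)%type R) (p1 t : R)
  (x y : bool) : R :=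
  (if x then p1 else 1 - p1) * (if y then Gcens mu x t else 1 - Gcens mu x t).

Section integral.
Context (R : realType) (d : measure_display) (Omega : measurableType d)
  (P : probability Omega R) (n : nat) (p1 : R) (T0 : 'I_n -> R)
  (Z : 'I_n -> Omega -> bool) (C1 C0 : 'I_n -> Omega -> \bar R)
  (mu : probability (\bar R * \bar R)%type R).
Hypothesis hZ : forall i, measurable_fun setT (Z i).
Hypothesis hC1 : forall i, measurable_fun setT (C1 i).
Hypothesis hC0 : forall i, measurable_fun setT (C0 i).
Hypothesis hP : forall (b : 'I_n -> bool) (B : 'I_n -> set (\bar R * \bar R)%type),
      (forall i, measurable (B i)) ->
      P [set w | forall i, Z i w = b i /\ B i (C1 i w, C0 i w)] =
      (\prod_(i < n) ((if b i then p1 else 1 - p1)%:E * mu (B i)))%E.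

Definition Aset t (b e : 'I_n -> bool) : set Omega :=
  [set w | forall i, Z i w = b i /\ Bs t (b i) (e i) (C1 i w, C0 i w)].

Lemma Aset_measurable t b e : measurable (Aset t b e).
Proof.
have -> : Aset t b e = \bigcap_(i in [set` enum 'I_n])
   ((Z i @^-1` [set b i]) `&` ((fun w => (C1 i w, C0 i w)) @^-1` Bs t (b i) (e i))).
  apply/seteqP; split => w /=.
    by move=> h i _; exact: h i.
  by move=> h i; apply: h; rewrite /= mem_enum.
rewrite bigcap_seq; apply: bigsetI_measurable => i _; apply: measurableI.
- by have := hZ i measurableT (Y := [set b i]) I; rewrite setTI.
- have := measurable_fun_pair (hC1 i) (hC0 i) measurableT (Bs_measurable t (b i) (e i)).
  by rewrite setTI.
Qed.

Lemma P_Aset t b e : P (Aset t b e) = (\prod_i qf mu p1 t (b i) (e i))%:E.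
Proof.
rewrite /Aset (@hP b (fun i => Bs t (b i) (e i))); last by move=> i; exact: Bs_measurable.
rewrite -prodEFin; apply: eq_bigr => i _; rewrite mu_Bs /qf.
by rewrite EFinM.
Qed.

Lemma indic_sum t w :
  Vf T0 t (fun i => Z i w) (fun i => (t%:E <= (if Z i w then C1 i w else C0 i w))%E)
  = \sum_(be : {ffun 'I_n -> bool} * {ffun 'I_n -> bool})
      Vf T0 t be.1 be.2 * \1_(Aset t be.1 be.2) w.
Proof.
pose bz := [ffun i => Z i w].
pose bc := [ffun i => (t%:E <= (if Z i w then C1 i w else C0 i w))%E].
rewrite (bigD1 (bz, bc)) //= big1 ?addr0.
  have hA : Aset t bz bc w.
    move=> i; rewrite !ffunE; split => //.
  rewrite indicE mem_set // mulr1.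
  have -> : (bz : 'I_n -> bool) = (fun i => Z i w) by apply: funext => i; rewrite ffunE.
  by have -> : (bc : 'I_n -> bool) = (fun i => (t%:E <= (if Z i w then C1 i w else C0 i w))%E)
    by apply: funext => i; rewrite ffunE.
move=> [b e] /= neq.
rewrite indicE memNset ?mulr0 // => hA; move/negP: neq; apply.
have hb : b = bz by apply/ffunP => i; rewrite ffunE; have [-> _] := hA i.
apply/eqP; congr pair => //.
apply/ffunP => i; rewrite ffunE; have [h1 h2] := hA i; move: h2; rewrite /Bs /= h1.
by move=> ->.
Qed.

Lemma term_meas t (b e : 'I_n -> bool) :
  measurable_fun setT (fun w => (Vf T0 t b e * \1_(Aset t b e) w)%:E).
Proof.
apply/measurable_EFinP; apply: measurable_funM; first exact: measurable_cst.
apply: measurable_indic; exact: Aset_measurable.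
Qed.

Lemma term_ge0 t (b e : 'I_n -> bool) w : (0 <= (Vf T0 t b e * \1_(Aset t b e) w)%:E)%E.
Proof. by rewrite lee_fin mulr_ge0 ?Vf_ge0 // indicE ler0n. Qed.

Lemma integral_U (T1 : 'I_n -> R) : (forall i, T1 i = T0 i) ->
  (\int[P]_w (logrank_U T1 T0 (fun i => Z i w) (fun i => C1 i w)
                             (fun i => C0 i w))%:E =
  (\sum_(tk <- undup [seq T0 i | i <- enum 'I_n])
     \sum_(be : {ffun 'I_n -> bool} * {ffun 'I_n -> bool})
        Vf T0 tk be.1 be.2 * \prod_i qf mu p1 tk (be.1 i) (be.2 i))%:E)%E.
Proof.
move=> H0.
rewrite (eq_integral (fun w => \sum_(tk <- undup [seq T0 i | i <- enum 'I_n])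
   \sum_(be : {ffun 'I_n -> bool} * {ffun 'I_n -> bool})
      ((Vf T0 tk be.1 be.2 * \1_(Aset tk be.1 be.2) w)%:E))); last first.
  move=> w _; rewrite U_eq //.
  under [RHS]eq_bigr do rewrite sumEFin.
  rewrite sumEFin; congr (_%:E); apply: eq_bigr => tk _; exact: indic_sum.
rewrite ge0_integral_sum //; first last.
- by move=> tk w _; apply: sume_ge0 => be _; exact: term_ge0.
- by move=> tk; apply: emeasurable_sum => be; exact: term_meas.
rewrite -sumEFin; apply: eq_bigr => tk _.
rewrite ge0_integral_sum //; first last.
- by move=> be w _; exact: term_ge0.
- by move=> be; exact: term_meas.
rewrite -sumEFin; apply: eq_bigr => be _.
rewrite (@integralZl_indic _ _ _ _ _ measurableT (fun _ : R => Aset tk be.1 be.2)) //; last first.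
  exact: Aset_measurable.
  by move=> /lt_geF; rewrite Vf_ge0.
rewrite integral_indic //; last exact: Aset_measurable.
rewrite setIT.
have key : ((Vf T0 tk be.1 be.2)%:E * P (Aset tk be.1 be.2) =
  (Vf T0 tk be.1 be.2 * \prod_i qf mu p1 tk (be.1 i) (be.2 i))%:E)%E.
  by rewrite P_Aset EFinM.
exact: key.
Qed.

End integral.

Local Close Scope classical_set_scope.

Lemma part_sum (R : realType) n (T0 : 'I_n -> R) (F : R -> R) :
  \sum_(tk <- undup [seq T0 i | i <- enum 'I_n])
     (#|[set j | T0 j == tk]|)%:R * F tk = \sum_i F (T0 i).
Proof.
under eq_bigr do rewrite natr_card big_distrl /=.
rewrite exchange_big /=; apply: eq_bigr => i _.
rewrite (eq_bigr (fun tk => if tk == T0 i then F (T0 i) else 0)); last first.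
  by move=> tk _; rewrite eq_sym; case: eqP => [->|]; rewrite ?mul1r ?mul0r.
rewrite -big_mkcond /= -big_filter.
have -> : [seq tk <- undup [seq T0 i0 | i0 <- enum 'I_n] | tk == T0 i] = [:: T0 i].
  apply: filter_pred1_uniq; first exact: undup_uniq.
  by rewrite mem_undup; apply: map_f; rewrite mem_enum.
by rewrite big_seq1.
Qed.

Lemma sum_atmost1 (R : realType) (L : seq R) (Q : pred R) (a : R -> R) (M : R) :
  uniq L -> 0 <= M ->
  (forall x y, x \in L -> y \in L -> Q x -> Q y -> x = y) ->
  (forall x, x \in L -> a x <= M) ->
  \sum_(x <- L) (if Q x then a x else 0) <= M.
Proof.
elim: L => [|x L IH] /=; first by rewrite big_nil.
move=> /andP[xL uL] M0 hQ ha; rewrite big_cons.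
case Qx: (Q x).
  rewrite big1_seq ?addr0; first by apply: ha; rewrite mem_head.
  move=> y /andP[_ yL]; case Qy: (Q y) => //.
  have yxL : y \in x :: L by rewrite inE yL orbT.
  have xy := hQ x y (mem_head _ _) yxL Qx Qy.
  by move: xL; rewrite xy yL.
rewrite add0r; apply: IH => //.
- by move=> u v uL1 vL1; apply: hQ; rewrite inE ?uL1 ?vL1 orbT.
- by move=> u uL1; apply: ha; rewrite inE uL1 orbT.
Qed.

Lemma dtildeE (R : realType) n (T0 : 'I_n -> R) :
  dtilde T0 = \max_(i < n) #|[set j | T0 j == T0 i]|.
Proof.
rewrite /dtilde; apply: eq_bigr => i _.
rewrite mem_setE; apply: eq_card => j; by rewrite !inE /= unfold_in.
Qed.

Lemma Gcens_01 (R : realType) (mu : probability (\bar R * \bar R)%type R) x t :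
  0 <= Gcens mu x t <= 1.
Proof.
have h := mu_Bs mu t x true; rewrite /= in h.
have h0 : (0 <= mu (Bs t x true))%E by apply: measure_ge0.
have h1 : (mu (Bs t x true) <= 1)%E by apply: probability_le1; exact: Bs_measurable.
by rewrite h lee_fin in h0; rewrite h lee_fin in h1; rewrite h0 h1.
Qed.

Lemma n_gtilde (R : realType) n (mu : probability (\bar R * \bar R)%type R)
  (T0 : 'I_n -> R) :
  n%:R * gtilde mu T0 = \sum_i (Gcens mu true (T0 i) * Gcens mu false (T0 i)).
Proof.
rewrite /gtilde /Gtilde; case: n T0 => [|m] T0.
  by rewrite big_ord0 !mul0r.
by rewrite mulrA mulfV ?mul1r // pnatr_eq0.
Qed.

Local Open Scope classical_set_scope.
Unset Implicit Arguments.

Theorem lemmaA7 (R : realType) (d : measure_display) (Omega : measurableType d)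
    (P : probability Omega R) (n : nat) (p1 : R) (T1 T0 : 'I_n -> R)
    (Z : 'I_n -> Omega -> bool) (C1 C0 : 'I_n -> Omega -> \bar R)
    (mu : probability (\bar R * \bar R)%type R) :
  0 < p1 < 1 ->
  (forall i, 0 <= T1 i) -> (forall i, 0 <= T0 i) ->
  (forall i, measurable_fun setT (Z i)) ->
  (forall i, measurable_fun setT (C1 i)) ->
  (forall i, measurable_fun setT (C0 i)) ->
  (forall i w, (0 <= C1 i w)%E) -> (forall i w, (0 <= C0 i w)%E) ->
  (forall (b : 'I_n -> bool) (B : 'I_n -> set (\bar R * \bar R)%type),
      (forall i, measurable (B i)) ->
      P [set w | forall i, Z i w = b i /\ B i (C1 i w, C0 i w)] =
      (\prod_(i < n) ((if b i then p1 else 1 - p1)%:E * mu (B i)))%E) ->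
  (forall i, T1 i = T0 i) ->
  ((p1 * (1 - p1) * (n%:R * gtilde mu T0 / ((dtilde T0)%:R + 1) - 1))%:E
    <= \int[P]_w (logrank_U T1 T0 (fun i => Z i w) (fun i => C1 i w)
                             (fun i => C0 i w))%:E)%E.
Proof.
move=> /andP[p10 p11] _ _ hZ hC1 hC0 _ _ hP H0.
rewrite (integral_U hZ hC1 hC0 hP H0) lee_fin.
set L := undup [seq T0 i | i <- enum 'I_n].
set dt := dtilde T0.
pose G x t := Gcens mu x t.
pose q t := qf mu p1 t.
have q0 t x y : 0 <= q t x y.
  rewrite /q /qf; have := Gcens_01 mu x t; case/andP => g0 g1.
  apply: mulr_ge0; first by case: (x); rewrite ?subr_ge0 ltW.
  by case: (y); rewrite ?subr_ge0.
have q1 t : q t true true + q t false true + (q t true false + q t false false) = 1.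
  rewrite /q /qf /=; ring.
pose a t := q t true true * q t false true * (#|[set i | T0 i == t]%SET|)%:R / (dt%:R + 1).
pose Ex t := [exists j, t < T0 j].
have dk t : t \in L -> (#|[set i | T0 i == t]%SET| <= dt)%N.
  rewrite mem_undup => /mapP[i _ ->]; rewrite /dt dtildeE.
  exact: (le_bigmax _ (fun i0 : 'I_n => #|[set j | T0 j == T0 i0]%SET|) i).
have Ek t : t \in L -> (if Ex t then a t else 0) <=
    \sum_(be : {ffun 'I_n -> bool} * {ffun 'I_n -> bool})
       Vf T0 t be.1 be.2 * \prod_i qf mu p1 t (be.1 i) (be.2 i).
  move=> tL; rewrite -(pair_big xpredT xpredT (fun b e : {ffun 'I_n -> bool} => Vf T0 t b e * \prod_i qf mu p1 t (b i) (e i))) /=.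
  case: ifP => [/existsP[j tj]|_].
    exact: (Ek_bound (q0 t) (q1 t) tj (dk t tL)).
  apply: sumr_ge0 => b _; apply: sumr_ge0 => e _.
  by apply: mulr_ge0; [exact: Vf_ge0 | apply: prodr_ge0 => i _; exact: q0].
have hsum : \sum_(t <- L) (if Ex t then a t else 0) <=
   \sum_(t <- L) \sum_(be : {ffun 'I_n -> bool} * {ffun 'I_n -> bool})
       Vf T0 t be.1 be.2 * \prod_i qf mu p1 t (be.1 i) (be.2 i).
  by rewrite big_seq [X in _ <= X]big_seq; apply: ler_sum => t tL; exact: Ek.
apply: le_trans hsum.
have hsplit : \sum_(t <- L) (if Ex t then a t else 0) =
   \sum_(t <- L) a t - \sum_(t <- L) (if ~~ Ex t then a t else 0).
  rewrite -sumrB; apply: eq_bigr => t _; case: (Ex t) => /=; ring.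
rewrite hsplit.
have hA : \sum_(t <- L) a t = p1 * (1 - p1) / (dt%:R + 1) *
    \sum_i (Gcens mu true (T0 i) * Gcens mu false (T0 i)).
  rewrite -(part_sum T0 (fun t => Gcens mu true t * Gcens mu false t)) big_distrr /=.
  by apply: eq_bigr => t _; rewrite /a /q /qf /=; ring.
have hM : \sum_(t <- L) (if ~~ Ex t then a t else 0) <= p1 * (1 - p1).
  apply: sum_atmost1.
  - exact: undup_uniq.
  - by rewrite mulr_ge0 // ?subr_ge0 ltW.
  - move=> x y; rewrite !mem_undup => /mapP[i _ ->] /mapP[i' _ ->].
    rewrite /Ex !negb_exists => /forallP hx /forallP hy.
    apply/le_anti; apply/andP; split; rewrite leNgt; [exact: hy | exact: hx].
  - move=> x xL; rewrite /a /q /qf /=.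
    have := Gcens_01 mu true x; have := Gcens_01 mu false x.
    case/andP => g00 g01 /andP[g10 g11].
    have dd : (#|[set i | T0 i == x]%SET|%:R <= dt%:R :> R) by rewrite ler_nat; exact: dk.
    have r1 : #|[set i | T0 i == x]%SET|%:R / (dt%:R + 1) <= 1 :> R.
      by rewrite ler_pdivrMr ?mul1r; [lra | rewrite ltr_wpDl].
    have r0 : 0 <= #|[set i | T0 i == x]%SET|%:R / (dt%:R + 1) :> R by rewrite divr_ge0 // addr_ge0.
    have pp : 0 <= p1 * (1 - p1) by rewrite mulr_ge0 // ?subr_ge0 ltW.
    set r := _ / _ in r1 r0.
    have -> : p1 * Gcens mu true x * ((1 - p1) * Gcens mu false x) * #|[set i | T0 i == x]%SET|%:R / (dt%:R + 1)
       = p1 * (1 - p1) * (Gcens mu true x * Gcens mu false x * r) by rewrite /r; ring.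
    rewrite -[X in _ <= X]mulr1; apply: ler_wpM2l => //.
    have : Gcens mu true x * Gcens mu false x <= 1 by nra.
    have : 0 <= Gcens mu true x * Gcens mu false x by nra.
    nra.
have hn : n%:R * gtilde mu T0 = \sum_i (Gcens mu true (T0 i) * Gcens mu false (T0 i)).
  exact: n_gtilde.
rewrite hA hn.
set S := \sum_i _.
lra.
Qed.
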